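(* Let $\mathcal{T}$ be a triangulation of a marked surface $(S,V)$. Then $D_f(\mathcal{T})\subset Q_f(\mathcal{T})$; that is, if $(\mathbf{I},\mathbf{r})\in\mathbb{R}^{E(\mathcal{T})}_{>1}\times\mathbb{R}^V_{>0}$ satisfies the local weighted Delaunay inequality on every edge of $\mathcal{T}$, then the lengths $L_f(\mathbf{I},\mathbf{r})$ satisfy the triangle inequalities on every face of $\mathcal{T}$ (so they define a piecewise flat metric).
   Context: A marked surface $(S,V)$: closed oriented surface $S$, nonempty finite $V=\{v_1,\dots,v_n\}$, $\chi(S\setminus V)<0$; a triangulation $\mathcal{T}$ is a $\Delta$-complex decomposition with $0$-cells $V$ (up to isotopy fixing $V$), with edges $E(\mathcal{T})$. For $(\mathbf{I},\mathbf{r})\in\mathbb{R}^{E(\mathcal{T})}_{>1}\times\mathbb{R}^V_{>0}$, $L_f(\mathbf{I},\mathbf{r})(e_{ij})=\sqrt{r_i^2+r_j^2+2I_{ij}r_ir_j}$. $Q_f(\mathcal{T})$ is the set of $(\mathbf{I},\mathbf{r})$ for which $L_f(\mathbf{I},\mathbf{r})$ satisfies the strict triangle inequality on every face. Local weighted Delaunay inequality at an edge $e_{ij}$ with adjacent faces $f_{ijk},f_{ijl}$ (hinge $\Diamond_{ij;kl}$): with $p=r_k,q=r_i,r=r_l,s=r_j$, $a=I_{ki},b=I_{il},c=I_{lj},d=I_{jk},e=I_{ij}$, $\Delta_{xyz}=x^2+y^2+z^2+2xyz-1$, $f=\frac{ab+cd+ace+bde+\sqrt{\Delta_{ade}}\sqrt{\Delta_{bce}}}{e^2-1}$,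 it is the inequality $\frac{\sqrt{\Delta_{bce}}}{p}+\frac{\sqrt{\Delta_{ade}}}{r}\le\frac{\sqrt{\Delta_{cdf}}}{q}+\frac{\sqrt{\Delta_{abf}}}{s}$. $D_f(\mathcal{T})$ is the set of $(\mathbf{I},\mathbf{r})\in\mathbb{R}^{E(\mathcal{T})}_{>1}\times\mathbb{R}^V_{>0}$ satisfying it at every edge. *)

(* Defs.v *)
From HB Require Import structures.
From mathcomp Require Import all_boot all_order all_algebra.
Set Implicit Arguments. Unset Strict Implicit. Unset Printing Implicit Defensive.
Import Order.TTheory GRing.Theory Num.Theory.
Local Open Scope ring_scope.

(* A triangle side ("half-edge") of face f : F is a pair (f, i), i : 'I_3.
   The side (f, i) goes from corner i to corner i+1 (mod 3) of f, following
   the orientation of f. *)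
Definition side (F : finType) := (F * 'I_3)%type.

Definition snext (F : finType) (h : side F) : side F := (h.1, ordS h.2).

(* A triangulation of a marked surface (S,V), with vertex set V, edge set E
   and face set F:
   - [glue] pairs the sides of the triangles (fixed-point-free involution);
     the gluing identifies side h with side [glue h] reversing orientation,
     so the result is a closed oriented surface;
   - [edge_of h] is the edge of T carried by the side h; edges are exactly
     the pairs {h, glue h};
   - [vert_of h] is the vertex at the start (corner) of side h; vertices are
     exactly the classes of corners identified by the gluing, i.e. the orbits
     of h |-> snext (glue h) (rotation around a vertex);
   - the surface is connected and has at least one face (so that
     chi(S \ V) = #|F| - #|E| = -#|F|/2 < 0). *)
Record triangulation (V E F : finType) := Triangulation {
  glue : side F -> side F;
  edge_of : side F -> E;
  vert_of : side F -> V;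
  glue_invol : involutive glue;
  glue_nofix : forall h, glue h != h;
  edge_ofE : forall h h', edge_of h = edge_of h' <-> (h' = h \/ h' = glue h);
  edge_of_surj : forall e : E, exists h, edge_of h = e;
  vert_ofE : forall h h', vert_of h = vert_of h' <->
                          fconnect (fun x => snext (glue x)) h h';
  vert_of_surj : forall v : V, exists h, vert_of h = v;
  surf_connected : forall h h',
     connect (fun x y => (y == glue x) || (y == snext x)) h h';
  faces_nonempty : (0 < #|F|)%N
}.

Section Weighted.
Variables (R : rcfType) (V E F : finType) (T : triangulation V E F).

Definition Lf (I : E -> R) (r : V -> R) (h : side F) : R :=
  let ri := r (vert_of T h) in
  let rj := r (vert_of T (snext h)) in
  Num.sqrt (ri ^+ 2 + rj ^+ 2 + 2 * I (edge_of T h) * ri * rj).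

Definition face_triangle_ineq (l : side F -> R) (f : F) : Prop :=
  let l0 := l (f, 0%R) in
  let l1 := l (f, 1%R) in
  let l2 := l (f, 2%R) in
  [/\ l0 < l1 + l2, l1 < l0 + l2 & l2 < l0 + l1].

Definition admissible (I : E -> R) (r : V -> R) : Prop :=
  (forall e, 1 < I e) /\ (forall v, 0 < r v).

Definition Qf (I : E -> R) (r : V -> R) : Prop :=
  admissible I r /\ forall f : F, face_triangle_ineq (Lf I r) f.

Definition Delta3 (x y z : R) : R := x ^+ 2 + y ^+ 2 + z ^+ 2 + 2 * x * y * z - 1.

(* With h = (f, m) going from vertex i to vertex j, k the third vertex of f,
   and glue h going from j to i in the other face with third vertex l. *)
Definition local_delaunay (I : E -> R) (r : V -> R) (h : side F) : Prop :=
  let h1 := snext h in let h2 := snext h1 in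
  let g := glue T h in let g1 := snext g in let g2 := snext g1 in
  let p := r (vert_of T h2) in   (* r_k *)
  let q := r (vert_of T h) in    (* r_i *)
  let rr := r (vert_of T g2) in  (* r_l *)
  let s := r (vert_of T h1) in   (* r_j *)
  let a := I (edge_of T h2) in   (* I_ki *)
  let b := I (edge_of T g1) in   (* I_il *)
  let c := I (edge_of T g2) in   (* I_lj *)
  let d := I (edge_of T h1) in   (* I_jk *)
  let e := I (edge_of T h) in    (* I_ij *)
  let fv := (a * b + c * d + a * c * e + b * d * e
             + Num.sqrt (Delta3 a d e) * Num.sqrt (Delta3 b c e)) / (e ^+ 2 - 1) in
  Num.sqrt (Delta3 b c e) / p + Num.sqrt (Delta3 a d e) / rr
  <= Num.sqrt (Delta3 c d fv) / q + Num.sqrt (Delta3 a b fv) / s.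

Definition delaunay_at_edge (I : E -> R) (r : V -> R) (e : E) : Prop :=
  forall h, edge_of T h = e -> local_delaunay I r h.

Definition Df (I : E -> R) (r : V -> R) : Prop :=
  admissible I r /\ forall e : E, delaunay_at_edge I r e.

End Weighted.

(* Main.v *)
Require Import Defs.
From mathcomp Require Import all_boot all_order all_algebra.
Local Open Scope ring_scope.
From mathcomp Require Import all_boot all_order all_algebra.
From mathcomp Require Import ring lra.
Set Implicit Arguments. Unset Strict Implicit. Unset Printing Implicit Defensive.
Import Order.TTheory GRing.Theory Num.Theory.
Local Open Scope ring_scope.

Section Alg.
Variable R : rcfType.
Implicit Types p q s rr a b c d e x y I : R.

Definition len (x y I : R) := Num.sqrt (x ^+ 2 + y ^+ 2 + 2 * I * x * y).

Lemma lenC x y I : len x y I = len y x I.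
Proof. by rewrite /len; congr Num.sqrt; ring. Qed.

Lemma len_sq x y I : 0 < x -> 0 < y -> 1 < I ->
  len x y I ^+ 2 = x ^+ 2 + y ^+ 2 + 2 * I * x * y.
Proof.
move=> hx hy hI; rewrite sqr_sqrtr //.
have h1 : 0 < x * y by apply: mulr_gt0.
have h2 : 0 < I * (x * y) by apply: mulr_gt0 => //; lra.
nra.
Qed.

Lemma sq_lt_lt x y : 0 <= x -> 0 <= y -> x ^+ 2 < y ^+ 2 -> x < y.
Proof. move=> hx hy h; rewrite ltNge; apply/negP => hle; nra. Qed.

Lemma sq_le_le x y : 0 <= x -> 0 <= y -> x ^+ 2 <= y ^+ 2 -> x <= y.
Proof. move=> hx hy h; rewrite leNgt; apply/negP => hle; nra. Qed.

Lemma len_gt x y I : 0 < x -> 0 < y -> 1 < I -> x + y < len x y I.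
Proof.
move=> hx hy hI.
have h0 := sqrtr_ge0 (x ^+ 2 + y ^+ 2 + 2 * I * x * y).
have h2 := len_sq hx hy hI.
rewrite /len in h2 *.
apply: sq_lt_lt => //; first lra.
rewrite h2.
have h1 : 0 < x * y by apply: mulr_gt0.
have h3 : 0 < (I - 1) * (x * y) by apply: mulr_gt0 => //; lra.
nra.
Qed.

Lemma len_gt0 x y I : 0 < x -> 0 < y -> 1 < I -> 0 < len x y I.
Proof. move=> hx hy hI; have := len_gt hx hy hI; lra. Qed.

Lemma Delta_gt0 a d e : 1 < a -> 1 < d -> 1 < e -> 0 < Delta3 a d e.
Proof.
move=> ha hd he; rewrite /Delta3.
have h1 : 0 < a * d by apply: mulr_gt0; lra.
have h2 : 0 < a * d * e by apply: mulr_gt0 => //; lra.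
nra.
Qed.

Definition Tf p q s a d e :=
  (e ^+ 2 - 1) * q * s - (a + d * e) * p * s - (d + a * e) * p * q.

Lemma face_deg p q s a d e : 0 < p -> 0 < q -> 0 < s -> 1 < a -> 1 < d -> 1 < e ->
  let A := len p q a in let B := len s p d in let C := len q s e in
  (e ^+ 2 - 1) * ((A + B + C) * (A + B - C) * (C - A + B) * (C + A - B))
  = 4 * (Delta3 a d e * p ^+ 2 * C ^+ 2 - Tf p q s a d e ^+ 2).
Proof.
move=> hp hq hs ha hd he A B C.
have hA := len_sq hp hq ha; have hB := len_sq hs hp hd; have hC := len_sq hq hs he.
rewrite -/A -/B -/C in hA hB hC.
have -> : (A + B + C) * (A + B - C) * (C - A + B) * (C + A - B) =
   2 * (A^+2 * B^+2 + B^+2 * C^+2 + C^+2 * A^+2) - (A^+2 ^+2 + B^+2 ^+2 + C^+2 ^+2) by ring.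
rewrite hC hA hB /Delta3 /Tf; ring.
Qed.


Lemma face_A1 p q s a d e : 0 < p -> 0 < q -> 0 < s -> 1 < a -> 1 < d -> 1 < e ->
  len s p d + len p q a <= len q s e ->
  0 < Tf p q s a d e /\ Delta3 a d e * p ^+ 2 * len q s e ^+ 2 <= Tf p q s a d e ^+ 2.
Proof.
move=> hp hq hs ha hd he hdeg.
have hA := len_sq hp hq ha; have hB := len_sq hs hp hd; have hC := len_sq hq hs he.
have hA0 := len_gt0 hp hq ha; have hB0 := len_gt0 hs hp hd; have hC0 := len_gt0 hq hs he.
have hAg := len_gt hp hq ha; have hBg := len_gt hs hp hd.
set A := len p q a in hA hA0 hAg hdeg *.
set B := len s p d in hB hB0 hBg hdeg *.
set C := len q s e in hC hC0 hdeg *.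
have hE : 0 < e ^+ 2 - 1 by nra.
split.
  have hAB : 0 < A * B by apply: mulr_gt0.
  have hK : (A + B) ^+ 2 <= C ^+ 2 by nra.
  set u := A ^+ 2 - q ^+ 2. set v := B ^+ 2 - s ^+ 2.
  have hu : 0 < u by rewrite /u; nra.
  have hv : 0 < v by rewrite /v; nra.
  have huv : 0 < u * v by apply: mulr_gt0.
  set en := C ^+ 2 - q ^+ 2 - s ^+ 2.
  set an := A ^+ 2 - p ^+ 2 - q ^+ 2.
  set dn := B ^+ 2 - p ^+ 2 - s ^+ 2.
  have hM : 4 * q * s * Tf p q s a d e =
     en * (en - an - dn) - 4 * q^+2 * s^+2 - 2 * an * s^+2 - 2 * dn * q^+2.
    by rewrite /en /an /dn hA hB hC /Tf; ring.
  have h1 : u + v + 2 * A * B <= en by rewrite /en /u /v; nra.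
  have h2 : 2 * A * B + 2 * p ^+ 2 <= en - an - dn by rewrite /en /an /dn; nra.
  have h3 : (u + v + 2 * A * B) * (2 * A * B + 2 * p ^+ 2) <= en * (en - an - dn).
    apply: ler_pM => //; nra.
  have h4 : 0 < 4 * q * s * Tf p q s a d e.
    rewrite hM.
    have eA : A ^+ 2 = q ^+ 2 + u by rewrite /u; ring.
    have eB : B ^+ 2 = s ^+ 2 + v by rewrite /v; ring.
    have ean : an = u - p ^+ 2 by rewrite /an /u; ring.
    have edn : dn = v - p ^+ 2 by rewrite /dn /v; ring.
    rewrite ean edn.
    have hAB2 : (A * B) ^+ 2 = (q ^+ 2 + u) * (s ^+ 2 + v) by rewrite exprMn eA eB.
    nra.
  have hqs : 0 < 4 * q * s by nra.
  by rewrite pmulr_rgt0 in h4.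
have hH := face_deg hp hq hs ha hd he.
rewrite -/A -/B -/C in hH.
have hF : (A + B + C) * (A + B - C) * (C - A + B) * (C + A - B) <= 0.
  have h1 : 0 <= (A + B + C) * (C - A + B) * (C + A - B).
    apply: mulr_ge0; [apply: mulr_ge0|]; lra.
  have h2 : A + B - C <= 0 by lra.
  nra.
have : (e ^+ 2 - 1) * ((A + B + C) * (A + B - C) * (C - A + B) * (C + A - B)) <= 0.
  by apply: mulr_ge0_le0 => //; lra.
rewrite hH; lra.
Qed.


Lemma face_A2 p q s a d e : 0 < p -> 0 < q -> 0 < s -> 1 < a -> 1 < d -> 1 < e ->
  Delta3 a d e * p ^+ 2 * len q s e ^+ 2 <= Tf p q s a d e ^+ 2 ->
  [\/ len s p d + len p q a <= len q s e,
       len q s e + len s p d <= len p q a |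
       len q s e + len p q a <= len s p d].
Proof.
move=> hp hq hs ha hd he hT.
have hH := face_deg hp hq hs ha hd he.
have hA0 := len_gt0 hp hq ha; have hB0 := len_gt0 hs hp hd; have hC0 := len_gt0 hq hs he.
set A := len p q a in hA0 hH *.
set B := len s p d in hB0 hH *.
set C := len q s e in hC0 hH hT *.
have hE : 0 < e ^+ 2 - 1 by nra.
have hP : (A + B + C) * (A + B - C) * (C - A + B) * (C + A - B) <= 0.
  have : (e ^+ 2 - 1) * ((A + B + C) * (A + B - C) * (C - A + B) * (C + A - B)) <= 0.
    rewrite hH; lra.
  by rewrite pmulr_rle0.
case: (lerP (A + B - C) 0) => h1; first by apply: Or31; lra.
case: (lerP (C - A + B) 0) => h2; first by apply: Or32; lra.
case: (lerP (C + A - B) 0) => h3; first by apply: Or33; lra.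
exfalso.
have : 0 < (A + B + C) * (A + B - C) * (C - A + B) * (C + A - B).
  by repeat apply: mulr_gt0 => //; lra.
lra.
Qed.


Lemma sqrt_ids a b c d e : 1 < a -> 1 < b -> 1 < c -> 1 < d -> 1 < e ->
  let X := Num.sqrt (Delta3 a d e) in let Y := Num.sqrt (Delta3 b c e) in
  let fv := (a * b + c * d + a * c * e + b * d * e + X * Y) / (e ^+ 2 - 1) in
  Num.sqrt (Delta3 c d fv) = ((a + d * e) * Y + (b + c * e) * X) / (e ^+ 2 - 1) /\
  Num.sqrt (Delta3 a b fv) = ((d + a * e) * Y + (c + b * e) * X) / (e ^+ 2 - 1).
Proof.
move=> ha hb hc hd he X Y fv.
have hX : X ^+ 2 = Delta3 a d e by rewrite sqr_sqrtr // ltW // Delta_gt0.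
have hY : Y ^+ 2 = Delta3 b c e by rewrite sqr_sqrtr // ltW // Delta_gt0.
have hX0 : 0 <= X := sqrtr_ge0 _.
have hY0 : 0 <= Y := sqrtr_ge0 _.
have hE : 0 < e ^+ 2 - 1 by nra.
have hE0 : e ^+ 2 - 1 != 0 by rewrite gt_eqF.
split.
  have -> : Delta3 c d fv = (((a + d * e) * Y + (b + c * e) * X) / (e ^+ 2 - 1)) ^+ 2.
    apply/eqP; rewrite -subr_eq0; apply/eqP.
    have -> : Delta3 c d fv - (((a + d * e) * Y + (b + c * e) * X) / (e ^+ 2 - 1)) ^+ 2
      = ((X ^+ 2 - Delta3 a d e) * (Y ^+ 2 - 2 * b * c * e - b ^+ 2 - c ^+ 2 * e ^+ 2)
         + (Y ^+ 2 - Delta3 b c e) * (- 1 + d ^+ 2 - d ^+ 2 * e ^+ 2 + e ^+ 2)) / (e ^+ 2 - 1) ^+ 2.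
      by rewrite /fv /Delta3; field.
    by rewrite hX hY !subrr !mul0r addr0 mul0r.
  rewrite sqrtr_sqr ger0_norm //; apply: divr_ge0; last lra.
  apply: addr_ge0; apply: mulr_ge0 => //; nra.
have -> : Delta3 a b fv = (((d + a * e) * Y + (c + b * e) * X) / (e ^+ 2 - 1)) ^+ 2.
  apply/eqP; rewrite -subr_eq0; apply/eqP.
  have -> : Delta3 a b fv - (((d + a * e) * Y + (c + b * e) * X) / (e ^+ 2 - 1)) ^+ 2
    = ((X ^+ 2 - Delta3 a d e) * (Y ^+ 2 - 2 * b * c * e - b ^+ 2 * e ^+ 2 - c ^+ 2)
       + (Y ^+ 2 - Delta3 b c e) * (- 1 + a ^+ 2 - a ^+ 2 * e ^+ 2 + e ^+ 2)) / (e ^+ 2 - 1) ^+ 2.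
    by rewrite /fv /Delta3; field.
  by rewrite hX hY !subrr !mul0r addr0 mul0r.
rewrite sqrtr_sqr ger0_norm //; apply: divr_ge0; last lra.
apply: addr_ge0; apply: mulr_ge0 => //; nra.
Qed.


Lemma hinge p q rr s a b c d e :
  0 < p -> 0 < q -> 0 < rr -> 0 < s ->
  1 < a -> 1 < b -> 1 < c -> 1 < d -> 1 < e ->
  let X := Num.sqrt (Delta3 a d e) in let Y := Num.sqrt (Delta3 b c e) in
  let fv := (a * b + c * d + a * c * e + b * d * e + X * Y) / (e ^+ 2 - 1) in
  Y / p + X / rr <= Num.sqrt (Delta3 c d fv) / q + Num.sqrt (Delta3 a b fv) / s ->
  len s p d + len p q a <= len q s e ->
  len q s e + len rr s c <= len q rr b \/ len q s e + len q rr b <= len rr s c.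
Proof.
move=> hp hq hrr hs ha hb hc hd he X Y fv hD hdeg.
have [h1 h2] := sqrt_ids ha hb hc hd he.
rewrite -/X -/Y -/fv in h1 h2.
rewrite h1 h2 in hD.
have hX : X ^+ 2 = Delta3 a d e by rewrite sqr_sqrtr // ltW // Delta_gt0.
have hY : Y ^+ 2 = Delta3 b c e by rewrite sqr_sqrtr // ltW // Delta_gt0.
have hX0 : 0 < X by rewrite sqrtr_gt0 Delta_gt0.
have hY0 : 0 < Y by rewrite sqrtr_gt0 Delta_gt0.
have hE : 0 < e ^+ 2 - 1 by nra.
set T1 := Tf p q s a d e. set T2 := Tf rr q s b c e.
have key : Y * T1 * rr + X * T2 * p <= 0.
  have -> : Y * T1 * rr + X * T2 * p = ((e ^+ 2 - 1) * p * q * rr * s) *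
     (Y / p + X / rr - (((a + d * e) * Y + (b + c * e) * X) / (e ^+ 2 - 1) / q
        + ((d + a * e) * Y + (c + b * e) * X) / (e ^+ 2 - 1) / s)).
    rewrite /T1 /T2 /Tf; field.
    by rewrite (gt_eqF hs) (gt_eqF hE) (gt_eqF hq) (gt_eqF hrr) (gt_eqF hp).
  apply: mulr_ge0_le0; last lra.
  by apply: ltW; repeat apply: mulr_gt0.
have [hT1 hT1s] := face_A1 hp hq hs ha hd he hdeg.
rewrite -/T1 in hT1 hT1s.
have hYT : 0 < Y * T1 * rr by repeat apply: mulr_gt0.
have hXT : X * T2 * p < 0 by lra.
have hXp : 0 < X * p by apply: mulr_gt0.
have hT2 : T2 < 0.
  rewrite ltNge; apply/negP => h.
  have : 0 <= X * T2 * p by apply: mulr_ge0; [apply: mulr_ge0|]; lra.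
  lra.
have hsq : (Y * T1 * rr) ^+ 2 <= (X * T2 * p) ^+ 2 by nra.
set C := len q s e in hT1s hsq *.
have hT2s : Delta3 b c e * rr ^+ 2 * C ^+ 2 <= T2 ^+ 2.
  have e1 : (Y * T1 * rr) ^+ 2 = Y ^+ 2 * rr ^+ 2 * T1 ^+ 2 by ring.
  have e2 : (X * T2 * p) ^+ 2 = (X * p) ^+ 2 * T2 ^+ 2 by ring.
  have hYr : 0 <= Y ^+ 2 * rr ^+ 2 by apply: mulr_ge0; apply: sqr_ge0.
  have h3 : Y ^+ 2 * rr ^+ 2 * (Delta3 a d e * p ^+ 2 * C ^+ 2) <= Y ^+ 2 * rr ^+ 2 * T1 ^+ 2.
    by apply: ler_wpM2l.
  have h4 : (X * p) ^+ 2 * (Delta3 b c e * rr ^+ 2 * C ^+ 2) <= (X * p) ^+ 2 * T2 ^+ 2.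
    rewrite -e2; apply: le_trans hsq; rewrite e1; apply: le_trans h3.
    rewrite -hX -hY le_eqVlt; apply/orP; left; apply/eqP; ring.
  rewrite ler_pM2l // in h4.
  by apply: exprn_gt0.
have hA2 := face_A2 hrr hq hs hb hc he.
rewrite -/C in hA2.
case: (hA2 hT2s) => h.
- exfalso.
  have [hT2' _] := face_A1 hrr hq hs hb hc he h.
  rewrite -/T2 in hT2'; lra.
- by left; rewrite (lenC rr s) (lenC q rr).
- by right; rewrite (lenC rr s) (lenC q rr).
Qed.

End Alg.

Section Comb.
Variables (R : rcfType) (V E F : finType) (T : triangulation V E F).

Lemma snext3 (h : side F) : snext (snext (snext h)) = h.
Proof.
case: h => f i; rewrite /snext /=; congr pair; apply/val_inj => /=.
case: i => [[|[|[|i]]] hi] //=.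
Qed.

Lemma vert_sg (h : side F) : vert_of T (snext (glue T h)) = vert_of T h.
Proof. by symmetry; apply/(vert_ofE T h); apply: fconnect1. Qed.

Lemma vert_g (h : side F) : vert_of T (glue T h) = vert_of T (snext h).
Proof. by rewrite -{2}(glue_invol T h) vert_sg. Qed.

Lemma edge_g (h : side F) : edge_of T (glue T h) = edge_of T h.
Proof. by symmetry; apply/(edge_ofE T h); right. Qed.

Lemma LfE (I : E -> R) (r : V -> R) h :
  Lf T I r h = len (r (vert_of T h)) (r (vert_of T (snext h))) (I (edge_of T h)).
Proof. by []. Qed.

Lemma no_deg (I : E -> R) (r : V -> R) : Df T I r ->
  forall h, Lf T I r h < Lf T I r (snext h) + Lf T I r (snext (snext h)).
Proof.
move=> [[hI hr] hD] h0; rewrite ltNge; apply/negP => H0.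
pose P := [pred h | Lf T I r (snext h) + Lf T I r (snext (snext h)) <= Lf T I r h].
have P0 : P h0 by [].
case: (arg_maxP (Lf T I r) P0) => hm Pm hmax.
set g := glue T hm.
have hDm : local_delaunay T I r hm := hD (edge_of T hm) hm erefl.
have Hdeg : len (r (vert_of T (snext hm))) (r (vert_of T (snext (snext hm)))) (I (edge_of T (snext hm)))
   + len (r (vert_of T (snext (snext hm)))) (r (vert_of T hm)) (I (edge_of T (snext (snext hm))))
   <= len (r (vert_of T hm)) (r (vert_of T (snext hm))) (I (edge_of T hm)).
  by move: Pm; rewrite /P inE !LfE snext3.
have := hinge (hr _) (hr _) (hr (vert_of T (snext (snext g)))) (hr _) (hI _) (hI (edge_of T (snext g)))
  (hI (edge_of T (snext (snext g)))) (hI _) (hI _) hDm Hdeg.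
have eg1 : Lf T I r (snext g) = len (r (vert_of T hm)) (r (vert_of T (snext (snext g)))) (I (edge_of T (snext g))).
  by rewrite LfE /g vert_sg.
have eg2 : Lf T I r (snext (snext g)) = len (r (vert_of T (snext (snext g)))) (r (vert_of T (snext hm))) (I (edge_of T (snext (snext g)))).
  by rewrite LfE snext3 /g vert_g.
have eg : Lf T I r g = len (r (vert_of T hm)) (r (vert_of T (snext hm))) (I (edge_of T hm)).
  by rewrite LfE /g vert_g vert_sg edge_g lenC.
have ehm : Lf T I r hm = len (r (vert_of T hm)) (r (vert_of T (snext hm))) (I (edge_of T hm)) by [].
have hpos1 := len_gt0 (hr (vert_of T (snext (snext g)))) (hr (vert_of T (snext hm))) (hI (edge_of T (snext (snext g)))).
have hpos2 := len_gt0 (hr (vert_of T hm)) (hr (vert_of T (snext (snext g)))) (hI (edge_of T (snext g))).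
case=> Hc.
- have Pg1 : P (snext g) by rewrite /P inE snext3; lra.
  have hle : Lf T I r (snext g) <= Lf T I r hm := hmax _ Pg1; lra.
- have Pg2 : P (snext (snext g)) by rewrite /P inE !snext3; lra.
  have hle : Lf T I r (snext (snext g)) <= Lf T I r hm := hmax _ Pg2; lra.
Qed.

End Comb.

Theorem theorem4p4 (R : rcfType) (V E F : finType) (T : triangulation V E F)
  (I : E -> R) (r : V -> R) :
  Df T I r -> Qf T I r.
Proof.
move=> hDf; split; first by case: hDf.
move=> f; have H := no_deg hDf.
have e1 : snext (f, 0%R : 'I_3) = (f, 1%R) by congr pair; apply/val_inj.
have e2 : snext (f, 1%R : 'I_3) = (f, 2%R) by congr pair; apply/val_inj.
have e0 : snext (f, 2%R : 'I_3) = (f, 0%R) by congr pair; apply/val_inj.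
have h0 := H (f, 0%R); have h1 := H (f, 1%R); have h2 := H (f, 2%R).
rewrite ?e1 ?e2 ?e0 in h0 h1 h2.
rewrite e1 in h2; rewrite /face_triangle_ineq /=; split; lra.
Qed.
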